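(* Let $w\in\{0,1\}^*$ and let $w'$ be a subword of $w$ such that $w'=abb\,\mu(w'')$ or $w'=\mu(w'')\,bba$ for some letters $a,b\in\{0,1\}$ with $a\neq b$ and some word $w''\in\{0,1\}^*$ with $|w''|\geq 2$. Then $w$ contains a $\frac{7}{3}$-power (i.e., $w$ is not $\frac{7}{3}$-power-free).
   Context: $\mu$ is the Thue–Morse morphism on $\{0,1\}^*$, defined by $\mu(0)=01$, $\mu(1)=10$. A word $w'$ is a subword of $w$ if $w=uw'v$ for some words $u,v$. For a rational $\alpha\ge 1$, an $\alpha$-power is a word of the form $x^nx'$ with $x$ a nonempty word, $x'$ a prefix of $x$, $n$ a nonnegative integer and $n+|x'|/|x|=\alpha$. A word is $\alpha$-power-free if none of its subwords is a $\beta$-power for any rational $\beta\geq\alpha$; otherwise it contains an $\alpha$-power. *)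

(* Defs.v *)
From mathcomp Require Import all_boot all_order all_algebra.
Set Implicit Arguments. Unset Strict Implicit. Unset Printing Implicit Defensive.
Import Order.TTheory GRing.Theory Num.Theory.

(* Binary words are [seq bool]; letter 0 is [false], letter 1 is [true]. *)

Definition mu (w : seq bool) : seq bool :=
  flatten (map (fun c : bool => [:: c; ~~ c]) w).

Definition subword (w' w : seq bool) : Prop := exists u v, w = u ++ w' ++ v.

Definition is_power (alpha : rat) (y : seq bool) : Prop :=
  exists (x x' : seq bool) (n : nat),
    x != [::] /\ prefix x' x /\ y = flatten (nseq n x) ++ x' /\
    (n%:R + (size x')%:R / (size x)%:R = alpha)%R.

Definition power_free (alpha : rat) (w : seq bool) : Prop :=
  forall y, subword y w -> forall beta : rat, (alpha <= beta)%R -> ~ is_power beta y.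

(* Main.v *)
Require Import Defs.
From mathcomp Require Import all_boot all_order all_algebra.

Lemma key (y p q w : seq bool) (beta : rat) :
  subword (p ++ y ++ q) w -> (7%:R / 3%:R <= beta)%R -> is_power beta y ->
  ~ power_free (7%:R / 3%:R)%R w.
Proof.
move=> [u [v ->]] hb hp hf.
apply: (hf y _ beta hb hp).
exists (u ++ p), (q ++ v). by rewrite -!catA.
Qed.

Lemma key2 (w' w y p q : seq bool) (beta : rat) :
  subword w' w -> w' = p ++ y ++ q -> (7%:R / 3%:R <= beta)%R -> is_power beta y ->
  ~ power_free (7%:R / 3%:R)%R w.
Proof. by move=> h E; apply: (key y p q w beta); rewrite -E. Qed.

Lemma le_cube : ((7%:R / 3%:R <= 3%:R :> rat))%R. Proof. by vm_compute. Qed.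
Lemma le_fivehalf : ((7%:R / 3%:R <= 5%:R / 2%:R :> rat))%R. Proof. by vm_compute. Qed.
Lemma le_seventhird : ((7%:R / 3%:R <= 7%:R / 3%:R :> rat))%R. Proof. exact: Order.POrderTheory.lexx. Qed.

Lemma cube (b : bool) : is_power 3%:R [:: b; b; b].
Proof. exists [:: b], [::], 3; split => //; split => //. Qed.

Lemma fivehalf (a b : bool) : is_power (5%:R / 2%:R)%R [:: b; a; b; a; b].
Proof. exists [:: b; a], [:: b], 2; do ![split => //]; by [rewrite /prefix /= eqxx | apply/eqP]. Qed.

Lemma seventhird (a b : bool) : is_power (7%:R / 3%:R)%R [:: a; b; b; a; b; b; a].
Proof. exists [:: a; b; b], [:: a], 2; do ![split => //]; by [rewrite /prefix /= eqxx | apply/eqP]. Qed.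

Lemma mu_cat s t : mu (s ++ t) = mu s ++ mu t.
Proof. by rewrite /mu map_cat flatten_cat. Qed.

Theorem lemma4 (w w' w'' : seq bool) (a b : bool) :
  subword w' w -> a != b -> 2 <= size w'' ->
  (w' = [:: a; b; b] ++ mu w'' \/ w' = mu w'' ++ [:: b; b; a]) ->
  ~ power_free (7%:R / 3%:R)%R w.
Proof.
move=> hs hab hsz [] E; subst w'.
- case: w'' hsz hs => [|c [|d t]] // _ hs.
  move: hs; rewrite (_ : mu [:: c, d & t] = [:: c; ~~ c; d; ~~ d] ++ mu t) //.
  case: a b c d hab => [] [] [] [] // _ hs.
  + apply: (key2 _ _ _ ([:: true; false]) _ _ hs _ le_fivehalf (fivehalf _ _)); by rewrite -?catA.
  + apply: (key2 _ _ _ ([::]) _ _ hs _ le_seventhird (seventhird _ _)); by rewrite -?catA.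
  + apply: (key2 _ _ _ ([:: true]) _ _ hs _ le_cube (cube _)); by rewrite -?catA.
  + apply: (key2 _ _ _ ([:: true]) _ _ hs _ le_cube (cube _)); by rewrite -?catA.
  + apply: (key2 _ _ _ ([:: false]) _ _ hs _ le_cube (cube _)); by rewrite -?catA.
  + apply: (key2 _ _ _ ([:: false]) _ _ hs _ le_cube (cube _)); by rewrite -?catA.
  + apply: (key2 _ _ _ ([::]) _ _ hs _ le_seventhird (seventhird _ _)); by rewrite -?catA.
  + apply: (key2 _ _ _ ([:: false; true]) _ _ hs _ le_fivehalf (fivehalf _ _)); by rewrite -?catA.
- case/lastP: w'' hsz hs => [|s d] //; case/lastP: s => [|t c] //.
  rewrite !size_rcons => _ hs.
  move: hs; rewrite -!cats1 -catA mu_cat (_ : mu ([:: c] ++ [:: d]) = [:: c; ~~ c; d; ~~ d]) //.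
  case: a b c d hab => [] [] [] [] // _ hs.
  + apply: (key2 _ _ _ (mu t ++ [:: true; false; true]) _ _ hs _ le_cube (cube _)); by rewrite -?catA.
  + apply: (key2 _ _ _ (mu t) _ _ hs _ le_seventhird (seventhird _ _)); by rewrite -?catA.
  + apply: (key2 _ _ _ (mu t ++ [:: false; true; true]) _ _ hs _ le_cube (cube _)); by rewrite -?catA.
  + apply: (key2 _ _ _ (mu t) _ _ hs _ le_fivehalf (fivehalf _ _)); by rewrite -?catA.
  + apply: (key2 _ _ _ (mu t) _ _ hs _ le_fivehalf (fivehalf _ _)); by rewrite -?catA.
  + apply: (key2 _ _ _ (mu t ++ [:: true; false; false]) _ _ hs _ le_cube (cube _)); by rewrite -?catA.
  + apply: (key2 _ _ _ (mu t) _ _ hs _ le_seventhird (seventhird _ _)); by rewrite -?catA.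
  + apply: (key2 _ _ _ (mu t ++ [:: false; true; false]) _ _ hs _ le_cube (cube _)); by rewrite -?catA.
Qed.
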